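(* Let $a<b$ and $f\in C([a,b])$. Then for every $\varepsilon>0$ there exists a function $\phi$ generated by a $\sigma$-activated network with width $36$ and depth $5$ such that $|\phi(x)-f(x)|<\varepsilon$ for all $x\in[a,b]$.
   Context: Let $\sigma_1:\mathbb{R}\to\mathbb{R}$ be the continuous triangular-wave function of period $2$: $\sigma_1(x)=|x|$ for $x\in[-1,1]$, $\sigma_1(x+2)=\sigma_1(x)$. Let $\sigma_2(x)=x/(|x|+1)$. The activation function is $\sigma(x)=\sigma_1(x)$ for $x\ge0$ and $\sigma(x)=\sigma_2(x)$ for $x<0$, applied entrywise. A function generated by a $\sigma$-activated network with input dimension $n$, width $N$ and depth $L$ is a function of the form $\mathcal{L}_{\ell}\circ\sigma\circ\mathcal{L}_{\ell-1}\circ\cdots\circ\sigma\circ\mathcal{L}_0$ with $\ell\le L$ hidden layers, where $\mathcal{L}_0:\mathbb{R}^n\to\mathbb{R}^{N_1}$, $\mathcal{L}_i:\mathbb{R}^{N_i}\to\mathbb{R}^{N_{i+1}}$, $\mathcal{L}_\ell:\mathbb{R}^{N_\ell}\to\mathbb{R}$ are affine maps and each $N_i\le N$. *)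

(* Defs.v *)
From Stdlib Require Import Reals List.
Open Scope R_scope.

(* Triangular wave of period 2: |x| on [-1,1], extended 2-periodically.
   x - 2*floor((x+1)/2) lies in [-1,1) and differs from x by a multiple of 2. *)
Definition sigma1 (x : R) : R :=
  Rabs (x - 2 * IZR (Int_part ((x + 1) / 2))).

Definition sigma2 (x : R) : R := x / (Rabs x + 1).

Definition sigma (x : R) : R :=
  if Rle_dec 0 x then sigma1 x else sigma2 x.

Fixpoint fsum (m : nat) (f : nat -> R) : R :=
  match m with
  | O => 0
  | S m' => fsum m' f + f m'
  end.

(* An affine map R^m -> R^k is given by weights W i j and biases b i;
   vectors are represented as nat -> R, only the first m entries are read. *)
Record layer := mkLayer { lW : nat -> nat -> R; lb : nat -> R }.

Definition affine (m : nat) (L : layer) (x : nat -> R) : nat -> R :=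
  fun i => fsum m (fun j => lW L i j * x j) + lb L i.

(* Hidden layers: a list of (output width N_i, affine map); each followed by
   the entrywise activation sigma. Returns the final width and vector. *)
Fixpoint eval_hidden (m : nat) (hs : list (nat * layer)) (x : nat -> R)
  : nat * (nat -> R) :=
  match hs with
  | nil => (m, x)
  | (k, L) :: hs' => eval_hidden k hs' (fun i => sigma (affine m L x i))
  end.

Definition sigma_net (n N L : nat) (g : (nat -> R) -> R) : Prop :=
  exists (hs : list (nat * layer)) (Lout : layer),
    (length hs <= L)%nat /\
    Forall (fun p => (fst p <= N)%nat) hs /\
    forall x, g x = affine (fst (eval_hidden n hs x)) Lout
                           (snd (eval_hidden n hs x)) 0%nat.

Definition cont_on_interval (f : R -> R) (a b : R) : Prop :=
  forall x, a <= x <= b -> limit1_in f (fun y => a <= y <= b) (f x) x.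

(* Main.v *)
Require Import Defs.
From Stdlib Require Import Reals Lra Lia ZArith Znumtheory List Arith.
Import ListNotations.
Import Defs.

Open Scope Z_scope.

Lemma fact_div (n k : nat) : (1 <= k <= n)%nat -> (Z.of_nat k | Z.of_nat (fact n)).
Proof.
  induction n as [|n IH]; intros Hk; [lia|].
  change (fact (S n)) with (S n * fact n)%nat. rewrite Nat2Z.inj_mul.
  destruct (Nat.eq_dec k (S n)) as [E|E].
  - subst. apply Z.divide_mul_l. apply Z.divide_refl.
  - apply Z.divide_mul_r. apply IH. lia.
Qed.

Definition qz (M : Z) (j : nat) : Z := 1 + M * (Z.of_nat j + 1).

Lemma q_coprime (M : Z) (L : nat) :
  (forall k, (1 <= k <= L)%nat -> (Z.of_nat k | M)) ->
  forall i j, (i < j)%nat -> (j <= L)%nat -> rel_prime (qz M i) (qz M j).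
Proof.
  intros HM i j Hij HjL. unfold rel_prime. apply Zis_gcd_intro.
  - apply Z.divide_1_l.
  - apply Z.divide_1_l.
  - intros x Hi Hj.
    assert (Hd : (x | Z.of_nat (j - i))).
    { replace (Z.of_nat (j - i)) with
        (qz M i * (Z.of_nat j + 1) - qz M j * (Z.of_nat i + 1))
        by (unfold qz; rewrite Nat2Z.inj_sub by lia; ring).
      apply Z.divide_sub_r; apply Z.divide_mul_l; auto. }
    assert (HxM : (x | M)).
    { apply Z.divide_trans with (Z.of_nat (j - i)); auto. apply HM. lia. }
    replace 1 with (qz M i - M * (Z.of_nat i + 1)) by (unfold qz; ring).
    apply Z.divide_sub_r; auto. apply Z.divide_mul_l; auto.
Qed.

Section CRT.
Variable q r : nat -> Z.
Variable L : nat.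
Hypothesis Hq : forall i, 0 < q i.
Hypothesis Hcop : forall i j, (i < j)%nat -> (j <= L)%nat -> rel_prime (q i) (q j).

Fixpoint prodq (n : nat) : Z := match n with O => 1 | S n => prodq n * q n end.

Lemma prodq_pos n : 0 < prodq n.
Proof. induction n; simpl; [lia| pose proof (Hq n); nia]. Qed.

Lemma prodq_div n i : (i < n)%nat -> (q i | prodq n).
Proof.
  induction n; intros H; [lia|]. simpl.
  destruct (Nat.eq_dec i n) as [E|E].
  - subst. apply Z.divide_mul_r. apply Z.divide_refl.
  - apply Z.divide_mul_l. apply IHn. lia.
Qed.

Lemma prodq_cop n : (n <= L)%nat -> rel_prime (q n) (prodq n).
Proof.
  intros Hn. assert (forall m, (m <= n)%nat -> rel_prime (q n) (prodq m)).
  { induction m; intros Hm; simpl.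
    - apply rel_prime_sym, rel_prime_1.
    - apply rel_prime_mult. apply IHm; lia. apply rel_prime_sym, Hcop; lia. }
  apply H; lia.
Qed.

Lemma crt n : (n <= S L)%nat -> exists N, 0 <= N /\ forall i, (i < n)%nat -> exists k, N = q i * k + r i.
Proof.
  induction n as [|n IH]; intros Hn.
  - exists 0; split; [lia| intros; lia].
  - destruct IH as [N [HN HN']]; [lia|].
    destruct (rel_prime_bezout _ _ (rel_prime_sym _ _ (prodq_cop n ltac:(lia)))) as [u v Huv].
    set (P := prodq n) in *.
    set (s := (u * (r n - N)) mod (q n)).
    pose proof (Z.mod_pos_bound (u * (r n - N)) (q n) (Hq n)).
    pose proof (prodq_pos n).
    exists (N + P * s). split; [fold s in H; nia|].
    intros i Hi. destruct (Nat.eq_dec i n) as [E|E].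
    + subst i.
      pose proof (Z_div_mod_eq_full (u * (r n - N)) (q n)) as Hdm. fold s in Hdm.
      exists (- v * (r n - N) - P * ((u * (r n - N)) / q n)).
      set (D := u * (r n - N) / q n) in *.
      assert (Hs : s = u * (r n - N) - q n * D) by lia.
      rewrite Hs.
      assert (Hu : u * P = 1 - v * q n) by lia.
      transitivity (N + (u * P) * (r n - N) - P * q n * D); [ring|].
      rewrite Hu. ring.
    + destruct (HN' i ltac:(lia)) as [k Hk].
      destruct (prodq_div n i ltac:(lia)) as [c Hc].
      exists (k + c * s). fold P in Hc. rewrite Hk, Hc. ring.
Qed.
End CRT.

Close Scope Z_scope.
Open Scope R_scope.

Lemma Int_part_eq (r : R) (k : Z) : IZR k <= r < IZR k + 1 -> Int_part r = k.
Proof.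
  intros [H1 H2]. unfold Int_part.
  assert (up r = (k+1)%Z).
  { symmetry; apply tech_up; rewrite plus_IZR; lra. }
  lia.
Qed.

Lemma s1_floor (y : R) : let k := Int_part ((y+1)/2) in
  -1 <= y - 2 * IZR k < 1 /\ sigma1 y = Rabs (y - 2 * IZR k).
Proof.
  intros k. destruct (base_Int_part ((y+1)/2)) as [H1 H2]. fold k in H1, H2.
  split; [lra| reflexivity].
Qed.

Lemma s1_abs (y : R) (n : Z) : -1 <= y - 2 * IZR n <= 1 -> sigma1 y = Rabs (y - 2 * IZR n).
Proof.
  intros H. destruct (s1_floor y) as [H1 H2]. rewrite H2.
  revert H1 H2. generalize (Int_part ((y+1)/2)). intros k H1 H2.
  assert (Ha : IZR (k - n) > -1) by (rewrite minus_IZR; lra).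
  assert (Hb : IZR (k - n) <= 1) by (rewrite minus_IZR; lra).
  apply lt_IZR in Ha. apply le_IZR in Hb.
  assert (k = n \/ k = (n+1)%Z) as [E|E] by lia; subst k.
  - reflexivity.
  - rewrite plus_IZR in *.
    rewrite (Rabs_left1 (y - 2 * (IZR n + 1))) by lra.
    rewrite Rabs_pos_eq by lra. lra.
Qed.

Lemma s1_range (y : R) : 0 <= sigma1 y <= 1.
Proof.
  destruct (s1_floor y) as [H1 H2]. rewrite H2.
  unfold Rabs; destruct Rcase_abs; lra.
Qed.

Lemma sig_pos (y : R) : 0 <= y -> sigma y = sigma1 y.
Proof. intros H; unfold sigma; destruct Rle_dec; [reflexivity| lra]. Qed.

Lemma sig_neg (y : R) : y <= 0 -> sigma y = y / (1 - y).
Proof.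
  intros H; unfold sigma; destruct Rle_dec.
  - assert (y = 0) by lra; subst.
    rewrite (s1_abs 0 0) by (simpl; lra). simpl. rewrite Rmult_0_r, Rminus_0_r, Rabs_R0. unfold Rdiv; ring.
  - unfold sigma2. rewrite Rabs_left by lra. f_equal; ring.
Qed.

Lemma sig_range (y : R) : 0 <= y -> 0 <= sigma y <= 1.
Proof. intros H; rewrite sig_pos by lra; apply s1_range. Qed.

Lemma sig_id (y : R) : 0 <= y <= 1 -> sigma y = y.
Proof.
  intros H; rewrite sig_pos by lra. rewrite (s1_abs y 0) by (simpl; lra).
  rewrite Rmult_0_r, Rminus_0_r, Rabs_pos_eq; lra.
Qed.

Lemma sig_abs (y : R) (n : Z) : 0 <= y -> -1 <= y - 2 * IZR n <= 1 -> sigma y = Rabs (y - 2 * IZR n).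
Proof. intros H H'. rewrite sig_pos by lra. apply s1_abs; auto. Qed.

Lemma sig_absN (y : R) (n : nat) : 0 <= y -> -1 <= y - 2 * INR n <= 1 -> sigma y = Rabs (y - 2 * INR n).
Proof. rewrite INR_IZR_INZ. apply sig_abs. Qed.


Ltac sigc n := rewrite (sig_absN _ n);
  [unfold Rabs; destruct Rcase_abs; rewrite ?S_INR, ?INR_0 in *; lra
  | rewrite ?S_INR, ?INR_0; lra | rewrite ?S_INR, ?INR_0; lra].

Definition Fp s := sigma (2*sigma(s+17/8) - 2*sigma(s+15/8) + sigma(s+2) + 7/2).
Definition Vp N M s := sigma (2*N + 2*N * sigma (M * Fp s - M * s - M)).

Lemma Fp_range s : 0 <= s -> 0 <= Fp s <= 1.
Proof.
  intros H. unfold Fp. apply sig_range.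
  pose proof (sig_range (s+17/8)). pose proof (sig_range (s+15/8)).
  pose proof (sig_range (s+2)). lra.
Qed.

Lemma neg_aux y : y <= 0 -> 1 + y / (1 - y) = 1 / (1 - y).
Proof. intros; field; lra. Qed.

Lemma Vp_range N M s : 0 <= s -> 0 <= N -> 0 <= M -> 0 <= Vp N M s <= 1.
Proof.
  intros Hs HN HM. unfold Vp. apply sig_range.
  pose proof (Fp_range s Hs).
  assert (Hy : M * Fp s - M * s - M <= 0) by nra.
  rewrite sig_neg by lra.
  replace (2 * N + 2 * N * ((M * Fp s - M * s - M) / (1 - (M * Fp s - M * s - M))))
    with (2 * N * (1 + (M * Fp s - M * s - M) / (1 - (M * Fp s - M * s - M)))) by ring.
  rewrite neg_aux by lra. apply Rmult_le_pos; [lra|].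
  apply Rlt_le, Rdiv_lt_0_compat; lra.
Qed.

Lemma Fp_val s j : INR j + 1/8 <= s <= INR j + 7/8 -> Fp s = s - INR j.
Proof.
  intros Hs. assert (0 <= INR j) by apply pos_INR.
  destruct (Nat.Even_or_Odd j) as [[n E]|[n E]]; subst j;
  rewrite ?plus_INR, mult_INR in Hs |- *; simpl (INR 2) in *; simpl (INR 1) in *; pose proof (pos_INR n).
  - assert (HA : sigma (s+17/8) = s + 17/8 - 2*INR (S n)) by sigc (S n).
    assert (HB : sigma (s+15/8) = s + 15/8 - 2*INR (S n)) by sigc (S n).
    assert (HC : sigma (s+2) = s + 2 - 2*INR (S n)) by sigc (S n).
    unfold Fp. rewrite HA, HB, HC. rewrite S_INR. sigc 2%nat.
  - assert (HA : sigma (s+17/8) = 2*INR (S (S n)) - (s + 17/8)) by sigc (S (S n)).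
    assert (HB : sigma (s+15/8) = 2*INR (S (S n)) - (s + 15/8)) by sigc (S (S n)).
    assert (HC : sigma (s+2) = 2*INR (S (S n)) - (s + 2)) by sigc (S (S n)).
    unfold Fp. rewrite HA, HB, HC. rewrite !S_INR. sigc 2%nat.
Qed.

Lemma Vp_val N M s j : 0 <= N -> 0 <= M -> INR j + 1/8 <= s <= INR j + 7/8 ->
  Vp N M s = sigma1 (2 * N / (1 + M * (INR j + 1))).
Proof.
  intros HN HM Hs. assert (0 <= INR j) by apply pos_INR.
  unfold Vp. rewrite (Fp_val s j Hs).
  replace (M * (s - INR j) - M * s - M) with (- (M * (INR j + 1))) by ring.
  assert (0 <= M * (INR j + 1)) by (apply Rmult_le_pos; lra).
  rewrite (sig_neg (- (M * (INR j + 1)))) by lra.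
  rewrite sig_pos.
  - f_equal. field. lra.
  - replace (2 * N + 2 * N * (- (M * (INR j + 1)) / (1 - - (M * (INR j + 1)))))
      with (2 * N / (1 + M * (INR j + 1))) by (field; lra).
    apply Rmult_le_pos; [lra|]. apply Rlt_le, Rinv_0_lt_compat; lra.
Qed.


Lemma approx_val (qq N k r : Z) (z : R) : (0 < qq)%Z -> 0 <= z <= 1 ->
  r = Int_part (z * IZR qq / 2) -> N = (qq * k + r)%Z ->
  Rabs (sigma1 (2 * IZR N / IZR qq) - z) <= 2 / IZR qq.
Proof.
  intros Hq Hz Hr HN.
  destruct (base_Int_part (z * IZR qq / 2)) as [H1 H2]. rewrite <- Hr in H1, H2.
  assert (Hqr : 0 < IZR qq) by (apply IZR_lt; lia).
  assert (Hr0 : (0 <= r)%Z).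
  { assert (IZR r > -1). { assert (0 <= z * IZR qq / 2) by (apply Rmult_le_pos; [apply Rmult_le_pos|]; lra). lra. }
    apply lt_IZR in H. lia. }
  apply IZR_le in Hr0.
  assert (E : 2 * IZR N / IZR qq - 2 * IZR k = 2 * IZR r / IZR qq).
  { rewrite HN, plus_IZR, mult_IZR. field. lra. }
  assert (Hb : IZR r * 2 <= z * IZR qq) by lra.
  assert (Hb2 : z * IZR qq - 2 < IZR r * 2) by lra.
  assert (Hrq : 2 * IZR r / IZR qq <= z).
  { apply Rmult_le_reg_r with (IZR qq); [lra|]. field_simplify; try lra. }
  assert (Hrq2 : z - 2 / IZR qq < 2 * IZR r / IZR qq).
  { apply Rmult_lt_reg_r with (IZR qq); [lra|]. field_simplify; try lra. }
  assert (Hpos : 0 <= 2 * IZR r / IZR qq).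
  { apply Rmult_le_pos; [lra| apply Rlt_le, Rinv_0_lt_compat; lra]. }
  rewrite (s1_abs _ k). 2:{ rewrite E. set (w := 2 * IZR r / IZR qq) in *. lra. } rewrite E.
  rewrite (Rabs_pos_eq (2 * IZR r / IZR qq)) by lra.
  unfold Rabs; destruct Rcase_abs; lra.
Qed.


Definition Om t := sigma (2*t + 9/4) + sigma (2*t + 7/4) - 1/2.

Ltac rwsig y n := rewrite (sig_absN y n) by (rewrite ?S_INR; lra).
Ltac absl := unfold Rabs; repeat destruct Rcase_abs; rewrite ?S_INR in *; lra.

Lemma Om_0 t j : 0 <= t -> (INR j <= t <= INR j + 1/8 \/ INR j + 7/8 <= t <= INR j + 1) -> Om t = 0.
Proof.
  intros H0 [H|H]; pose proof (pos_INR j); unfold Om.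
  - rwsig (2*t+9/4) (S j). rwsig (2*t+7/4) (S j). absl.
  - rwsig (2*t+9/4) (S (S j)). rwsig (2*t+7/4) (S (S j)). absl.
Qed.

Lemma Om_1 t j : INR j + 3/8 <= t <= INR j + 5/8 -> Om t = 1.
Proof.
  intros H; pose proof (pos_INR j); unfold Om.
  rwsig (2*t+9/4) (S (S j)). rwsig (2*t+7/4) (S j). absl.
Qed.

Lemma Om_mid t j : INR j + 1/8 <= t <= INR j + 7/8 -> 0 <= Om t <= 1.
Proof.
  intros H; pose proof (pos_INR j); unfold Om.
  destruct (Rle_dec t (INR j + 3/8)).
  { rwsig (2*t+9/4) (S j). rwsig (2*t+7/4) (S j). absl. }
  destruct (Rle_dec t (INR j + 5/8)).
  { rwsig (2*t+9/4) (S (S j)). rwsig (2*t+7/4) (S j). absl. }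
  rwsig (2*t+9/4) (S (S j)). rwsig (2*t+7/4) (S (S j)). absl.
Qed.

Lemma relu_T u : -3 <= u <= 3 -> (3/2)*(2*sigma((u/3+1)/2) - sigma(u/3+1)) = Rmax 0 u.
Proof.
  intros H. rewrite (sig_id ((u/3+1)/2)) by lra.
  unfold Rmax; destruct Rle_dec.
  - rewrite (sig_absN (u/3+1) 1) by (simpl; lra). simpl. absl.
  - rewrite (sig_id (u/3+1)) by lra. lra.
Qed.

Lemma comb V1 V2 w : 0 <= V1 <= 1 -> 0 <= V2 <= 1 -> 0 <= w <= 1 ->
  let psi := V2 + Rmax 0 (V1 - V2 + w) - Rmax 0 (V1 - V2 - w) - w in
  (w = 0 -> psi = V2) /\ (w = 1 -> psi = V1) /\ ((V1 <= psi <= V2) \/ (V2 <= psi <= V1)).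
Proof.
  intros H1 H2 H3 psi. unfold psi.
  unfold Rmax; repeat destruct Rle_dec; split; try split; intros; lra.
Qed.


Definition mkL (rows : list (list R)) (bs : list R) : layer :=
  mkLayer (fun i j => nth j (nth i rows nil) 0) (fun i => nth i bs 0).

Definition L1 al be Jr := mkL
  [[al];[al];[al];[al];[al];[al];[2*al];[2*al];[al/(Jr+1)]]
  [be+17/8; be+15/8; be+2; be+21/8; be+19/8; be+5/2; 2*be+9/4; 2*be+7/4; be/(Jr+1)].
Definition L2 := mkL
  [[2;-2;1]; [0;0;0;2;-2;1]; [0;0;0;0;0;0;0;0;1]; [0;0;0;0;0;0;1/2;1/2]]
  [7/2; 7/2; 0; 0].
Definition L3 Jr Mr := mkL
  [[Mr; 0; -Mr*(Jr+1)]; [0; Mr; -Mr*(Jr+1)]; [0;0;0;1]]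
  [-Mr; -3/2*Mr; 0].
Definition L4 Nr := mkL [[2*Nr]; [0; 2*Nr]; [0;0;1]] [2*Nr; 2*Nr; 0].
Definition L5 := mkL
  [[1/3; -1/3; 2/3]; [1/6; -1/6; 1/3]; [1/3; -1/3; -2/3]; [1/6; -1/6; -1/3]; [0;1]; [0;0;1]]
  [5/6; 5/12; 7/6; 7/12; 0; 0].
Definition Lout C := mkL [[-3*C; 6*C; 3*C; -6*C; 2*C; -4*C]] [0].

Definition hs al be Jr Mr Nr : list (nat * layer) :=
  [(9%nat, L1 al be Jr); (4%nat, L2); (3%nat, L3 Jr Mr); (3%nat, L4 Nr); (6%nat, L5)].

Definition netg al be Jr Mr Nr C (X : nat -> R) : R :=
  affine (fst (eval_hidden 1 (hs al be Jr Mr Nr) X)) (Lout C)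
         (snd (eval_hidden 1 (hs al be Jr Mr Nr) X)) 0%nat.

Lemma net_shape al be Jr Mr Nr C : sigma_net 1 36 5 (netg al be Jr Mr Nr C).
Proof.
  exists (hs al be Jr Mr Nr), (Lout C). split; [simpl; lia|]. split.
  - repeat constructor; simpl; lia.
  - intros; reflexivity.
Qed.

Lemma sig_eq a b : a = b -> sigma a = sigma b.
Proof. intros ->; reflexivity. Qed.

Lemma net_eval al be Jr Mr Nr C x : 
  0 <= al*x+be <= Jr -> 0 <= Jr -> 0 <= Mr -> 0 <= Nr ->
  let t := al*x+be in
  let V1 := Vp Nr Mr t in let V2 := Vp Nr Mr (t+1/2) in let w := Om t in
  netg al be Jr Mr Nr C (fun _ => x) =
    2*C*(V2 + Rmax 0 (V1 - V2 + w) - Rmax 0 (V1 - V2 - w) - w) - C.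
Proof.
  intros Ht HJ HM HN t V1 V2 w.
  unfold netg. simpl fst. simpl snd.
  set (X1 := fun i => sigma (affine 1 (L1 al be Jr) (fun _ => x) i)).
  set (X2 := fun i => sigma (affine 9 L2 X1 i)).
  set (X3 := fun i => sigma (affine 4 (L3 Jr Mr) X2 i)).
  set (X4 := fun i => sigma (affine 3 (L4 Nr) X3 i)).
  set (X5 := fun i => sigma (affine 3 L5 X4 i)).
  assert (Jr + 1 <> 0) by lra.
  assert (Ht0 : 0 <= t) by (unfold t; lra). assert (Ht1 : t <= Jr) by (unfold t; lra).
  Ltac l1 := unfold affine, L1, mkL; simpl; apply sig_eq; field; lra.
  assert (H10 : X1 0%nat = sigma (t + 17/8)) by (unfold X1, t; l1).
  assert (H11 : X1 1%nat = sigma (t + 15/8)) by (unfold X1, t; l1).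
  assert (H12 : X1 2%nat = sigma (t + 2)) by (unfold X1, t; l1).
  assert (H13 : X1 3%nat = sigma ((t + 1/2) + 17/8)) by (unfold X1, t; l1).
  assert (H14 : X1 4%nat = sigma ((t + 1/2) + 15/8)) by (unfold X1, t; l1).
  assert (H15 : X1 5%nat = sigma ((t + 1/2) + 2)) by (unfold X1, t; l1).
  assert (H16 : X1 6%nat = sigma (2*t + 9/4)) by (unfold X1, t; l1).
  assert (H17 : X1 7%nat = sigma (2*t + 7/4)) by (unfold X1, t; l1).
  assert (H18 : X1 8%nat = t / (Jr+1)).
  { transitivity (sigma (t / (Jr+1))). unfold X1, t; l1.
    apply sig_id. split. apply Rmult_le_pos; [lra| apply Rlt_le, Rinv_0_lt_compat; lra].
    apply Rmult_le_reg_r with (Jr+1); [lra|]. field_simplify; lra. }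
  pose proof (sig_range (2*t+9/4) ltac:(lra)) as R6.
  pose proof (sig_range (2*t+7/4) ltac:(lra)) as R7.
  Ltac l2 := unfold affine, L2, mkL; simpl.
  assert (H20 : X2 0%nat = Fp t).
  { unfold X2; l2. rewrite H10, H11, H12. unfold Fp; apply sig_eq; first [ring | lra | field | nra]. }
  assert (H21 : X2 1%nat = Fp (t+1/2)).
  { unfold X2; l2. rewrite H13, H14, H15. unfold Fp; apply sig_eq; first [ring | lra | field | nra]. }
  assert (H22 : X2 2%nat = t/(Jr+1)).
  { unfold X2; l2. rewrite H18. transitivity (sigma (t/(Jr+1))); [apply sig_eq; ring|]. apply sig_id.
    split; [apply Rmult_le_pos; [lra| apply Rlt_le, Rinv_0_lt_compat; lra]|].
    apply Rmult_le_reg_r with (Jr+1); [lra|]. field_simplify; lra. }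
  assert (H23 : X2 3%nat = (w + 1/2)/2).
  { unfold X2; l2. rewrite H16, H17. unfold w, Om.
    rewrite <- (sig_id ((sigma (2 * t + 9 / 4) + sigma (2 * t + 7 / 4) - 1 / 2 + 1 / 2) / 2)) by lra.
    apply sig_eq. lra. }
  Ltac l3 := unfold affine, L3, mkL; simpl.
  assert (H30 : X3 0%nat = sigma (Mr * Fp t - Mr * t - Mr)).
  { unfold X3; l3. rewrite H20, H22. apply sig_eq; field; lra. }
  assert (H31 : X3 1%nat = sigma (Mr * Fp (t+1/2) - Mr * (t+1/2) - Mr)).
  { unfold X3; l3. rewrite H21, H22. apply sig_eq; field; lra. }
  assert (H32 : X3 2%nat = (w + 1/2)/2).
  { unfold X3; l3. rewrite H23. transitivity (sigma ((w+1/2)/2)); [apply sig_eq; lra| apply sig_id; unfold w, Om; lra]. }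
  Ltac l4 := unfold affine, L4, mkL; simpl.
  assert (H40 : X4 0%nat = V1).
  { unfold X4; l4. rewrite H30. unfold V1, Vp. apply sig_eq; first [ring | lra | field | nra]. }
  assert (H41 : X4 1%nat = V2).
  { unfold X4; l4. rewrite H31. unfold V2, Vp. apply sig_eq; first [ring | lra | field | nra]. }
  assert (H42 : X4 2%nat = (w + 1/2)/2).
  { unfold X4; l4. rewrite H32. transitivity (sigma ((w+1/2)/2)); [apply sig_eq; lra| apply sig_id; unfold w, Om; lra]. }
  pose proof (Vp_range Nr Mr t Ht0 HN HM) as RV1.
  pose proof (Vp_range Nr Mr (t+1/2) ltac:(lra) HN HM) as RV2.
  fold V1 in RV1. fold V2 in RV2.
  assert (Rw : -1/2 <= w <= 3/2) by (unfold w, Om; lra).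
  Ltac l5 := unfold affine, L5, mkL; simpl.
  assert (H50 : X5 0%nat = sigma ((V1 - V2 + w)/3 + 1)).
  { unfold X5; l5. rewrite H40, H41, H42. apply sig_eq; field. }
  assert (H51 : X5 1%nat = sigma (((V1 - V2 + w)/3 + 1)/2)).
  { unfold X5; l5. rewrite H40, H41, H42. apply sig_eq; field. }
  assert (H52 : X5 2%nat = sigma ((V1 - V2 - w)/3 + 1)).
  { unfold X5; l5. rewrite H40, H41, H42. apply sig_eq; field. }
  assert (H53 : X5 3%nat = sigma (((V1 - V2 - w)/3 + 1)/2)).
  { unfold X5; l5. rewrite H40, H41, H42. apply sig_eq; field. }
  assert (H54 : X5 4%nat = V2).
  { unfold X5; l5. rewrite H41. transitivity (sigma V2); [apply sig_eq; lra| apply sig_id; lra]. }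
  assert (H55 : X5 5%nat = (w + 1/2)/2).
  { unfold X5; l5. rewrite H42. transitivity (sigma ((w+1/2)/2)); [apply sig_eq; lra| apply sig_id; lra]. }
  unfold affine, Lout, mkL; simpl.
  rewrite H50, H51, H52, H53, H54, H55.
  rewrite <- (relu_T (V1 - V2 + w)) by lra.
  rewrite <- (relu_T (V1 - V2 - w)) by lra.
  match goal with |- @eq _ ?a ?b => change (@eq R a b) end. field.
Qed.


Lemma fsum_nonneg m g : (forall i, 0 <= g i) -> 0 <= fsum m g.
Proof. intros H; induction m; simpl; [lra| specialize (H m); lra]. Qed.

Lemma fsum_ge m g : (forall i, 0 <= g i) -> forall j, (j < m)%nat -> g j <= fsum m g.
Proof.
  intros H; induction m; intros j Hj; [lia|]. simpl.
  destruct (Nat.eq_dec j m) as [->|E].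
  - pose proof (fsum_nonneg m g H); lra.
  - pose proof (IHm j ltac:(lia)); specialize (H m); lra.
Qed.

Lemma clamp_in a b y : a < b -> a <= Rmax a (Rmin y b) <= b.
Proof. intros; unfold Rmax, Rmin; repeat destruct Rle_dec; lra. Qed.
Lemma clamp_id a b y : a <= y <= b -> Rmax a (Rmin y b) = y.
Proof. intros; unfold Rmax, Rmin; repeat destruct Rle_dec; lra. Qed.
Lemma clamp_dist a b y x : a <= x <= b -> Rabs (Rmax a (Rmin y b) - x) <= Rabs (y - x).
Proof. intros; unfold Rmax, Rmin; repeat destruct Rle_dec; unfold Rabs; repeat destruct Rcase_abs; lra. Qed.

Lemma up_nat (r : R) : 0 < r -> exists n : nat, r < INR n /\ (0 < n)%nat.
Proof.
  intros Hr. destruct (archimed r) as [H1 H2].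
  assert (0 < up r)%Z by (apply lt_IZR; lra).
  exists (Z.to_nat (up r)). rewrite INR_IZR_INZ, Z2Nat.id by lia. split; [lra| lia].
Qed.

Theorem theorem6 (a b : R) (f : R -> R) :
  a < b -> cont_on_interval f a b ->
  forall eps : R, eps > 0 ->
  exists g : (nat -> R) -> R,
    sigma_net 1 36 5 g /\
    forall x : R, a <= x <= b -> Rabs (g (fun _ => x) - f x) < eps.
Proof.
  intros Hab Hc eps Heps.
  set (Fx := fun y => f (Rmax a (Rmin y b))).
  assert (HF : forall x, a <= x <= b -> continuity_pt Fx x).
  { intros x Hx. unfold continuity_pt, continue_in, limit1_in, limit_in.
    intros e He. destruct (Hc x Hx e He) as [al [Hal H]]. exists al; split; auto.
    intros y [_ Hy]. simpl in *. unfold R_dist in *. unfold Fx.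
    rewrite (clamp_id a b x Hx).
    apply H. split; [apply clamp_in; auto|].
    unfold R_dist. pose proof (clamp_dist a b y x Hx). lra. }
  assert (He2 : 0 < eps/2) by lra.
  destruct (@Heine_cor2 Fx a b HF (mkposreal _ He2)) as [del Hdel]. simpl in Hdel.
  assert (Hdel' : forall x y, a <= x <= b -> a <= y <= b -> Rabs (x - y) < del -> Rabs (f x - f y) < eps/2).
  { intros x y Hx Hy Hxy. specialize (Hdel x y Hx Hy Hxy). unfold Fx in Hdel.
    rewrite (clamp_id a b x Hx), (clamp_id a b y Hy) in Hdel. exact Hdel. }
  clear Hdel HF Fx.
  pose proof (cond_pos del) as Hd0.
  destruct (up_nat ((b-a)/del)) as [J [HJ HJ0]].
  { apply Rdiv_lt_0_compat; lra. }
  assert (HJr : 0 < INR J) by (apply lt_0_INR; lia).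
  assert (HJd : (b-a)/INR J < del).
  { assert (b - a < del * INR J).
    { apply Rmult_lt_compat_l with (r := del) in HJ; [|lra].
      replace (del * ((b-a)/del)) with (b-a) in HJ by (field; lra). lra. }
    apply Rmult_lt_reg_r with (INR J); [lra|]. field_simplify; lra. }
  set (xs := fun j : nat => a + (b-a) * INR j / INR J).
  assert (Hxs : forall j, (j <= J)%nat -> a <= xs j <= b).
  { intros j Hj. apply le_INR in Hj. pose proof (pos_INR j). unfold xs. split.
    - assert (0 <= (b-a) * INR j / INR J); [|lra].
      apply Rmult_le_pos; [apply Rmult_le_pos; lra| apply Rlt_le, Rinv_0_lt_compat; lra].
    - assert ((b-a) * INR j / INR J <= b - a); [|lra].
      apply Rmult_le_reg_r with (INR J); [lra|]. field_simplify; nra. }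
  set (C := 1 + fsum (S J) (fun j => Rabs (f (xs j)))).
  assert (HC : forall j, (j <= J)%nat -> Rabs (f (xs j)) <= C - 1).
  { intros j Hj. unfold C. pose proof (fsum_ge (S J) (fun j => Rabs (f (xs j))) (fun i => Rabs_pos _) j ltac:(lia)). cbv beta in H. lra. }
  assert (HC0 : 1 <= C) by (unfold C; pose proof (fsum_nonneg (S J) (fun j => Rabs (f (xs j))) (fun i => Rabs_pos _)); lra).
  set (z := fun j => (f (xs j) + C) / (2 * C)).
  assert (Hz : forall j, (j <= J)%nat -> 0 <= z j <= 1).
  { intros j Hj. specialize (HC j Hj). unfold z.
    assert (- C <= f (xs j) <= C) by (unfold Rabs in HC; destruct Rcase_abs; lra).
    split.
    - apply Rmult_le_pos; [lra| apply Rlt_le, Rinv_0_lt_compat; lra].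
    - apply Rmult_le_reg_r with (2*C); [lra|]. field_simplify; lra. }
  destruct (up_nat (8 * C / eps)) as [mm [Hmm Hmm0]].
  { apply Rdiv_lt_0_compat; lra. }
  set (M := (Z.of_nat mm * Z.of_nat (fact J))%Z).
  assert (HM : IZR M >= INR mm).
  { unfold M. rewrite mult_IZR, <- !INR_IZR_INZ. pose proof (lt_O_fact J) as Hf.
    assert (1 <= INR (fact J)) by (apply (le_INR 1); exact Hf). pose proof (pos_INR mm). nra. }
  assert (HM0 : (0 <= M)%Z) by (unfold M; lia).
  assert (HMd : forall k, (1 <= k <= J)%nat -> (Z.of_nat k | M)%Z).
  { intros k Hk. unfold M. apply Z.divide_mul_r. apply fact_div; auto. }
  assert (Hq : forall i, (0 < qz M i)%Z) by (intros; unfold qz; lia).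
  set (r := fun j => Int_part (z j * IZR (qz M j) / 2)).
  destruct (crt (qz M) r J Hq (q_coprime M J HMd) (S J) (le_n _)) as [N [HN0 HNk]].
  exists (netg (INR J / (b-a)) (- INR J * a / (b-a)) (INR J) (IZR M) (IZR N) C).
  split; [apply net_shape|].
  intros x Hx.
  set (t := INR J / (b - a) * x + - INR J * a / (b - a)).
  assert (Ht : 0 <= t <= INR J).
  { unfold t. replace (INR J / (b - a) * x + - INR J * a / (b - a)) with (INR J * ((x - a) / (b-a))) by (field; lra).
    assert (0 <= (x-a)/(b-a) <= 1).
    { split. apply Rmult_le_pos; [lra| apply Rlt_le, Rinv_0_lt_compat; lra].
      apply Rmult_le_reg_r with (b-a); [lra|]. field_simplify; lra. }
    nra. }
  assert (HMr : 0 <= IZR M) by (apply IZR_le; lia).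
  assert (HNr : 0 <= IZR N) by (apply IZR_le; lia).
  rewrite net_eval by (fold t; lra || lra).
  fold t.
  set (Gd := fun v => Rabs (2 * C * v - C - f x) < eps).
  assert (Gj : forall j, (j <= J)%nat -> Rabs (t - INR j) <= 1 -> forall s,
             INR j + 1/8 <= s <= INR j + 7/8 -> Gd (Vp (IZR N) (IZR M) s)).
  { intros j Hj Htj s Hs. unfold Gd. rewrite (Vp_val _ _ s j HNr HMr Hs).
    replace (1 + IZR M * (INR j + 1)) with (IZR (qz M j))
      by (unfold qz; rewrite plus_IZR, mult_IZR, plus_IZR, <- INR_IZR_INZ; ring).
    destruct (HNk j ltac:(lia)) as [k Hk].
    pose proof (approx_val (qz M j) N k (r j) (z j) (Hq j) (Hz j Hj) eq_refl Hk) as Hap.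
    set (v := sigma1 (2 * IZR N / IZR (qz M j))) in *.
    assert (Hqb : IZR (qz M j) >= 1 + IZR M).
    { unfold qz. rewrite plus_IZR, mult_IZR, plus_IZR, <- INR_IZR_INZ. pose proof (pos_INR j). nra. }
    assert (Hqp : 0 < IZR (qz M j)) by lra.
    assert (H8 : 8 * C < eps * IZR (qz M j)).
    { apply Rmult_lt_compat_l with (r := eps) in Hmm; [|lra].
      replace (eps * (8 * C / eps)) with (8 * C) in Hmm by (field; lra). nra. }
    assert (H4 : 2 * C * (2 / IZR (qz M j)) < eps / 2).
    { apply Rmult_lt_reg_r with (IZR (qz M j)); [lra|]. field_simplify; lra. }
    assert (Hxj : Rabs (f (xs j) - f x) < eps / 2).
    { apply Hdel'; auto. unfold xs.
      replace (a + (b - a) * INR j / INR J - x) with ((b-a)/INR J * (INR j - t))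
        by (unfold t; field; split; lra).
      rewrite Rabs_mult, (Rabs_pos_eq ((b-a)/INR J)) by (apply Rlt_le, Rdiv_lt_0_compat; lra).
      rewrite Rabs_minus_sym.
      assert (0 < (b-a)/INR J) by (apply Rdiv_lt_0_compat; lra). nra. }
    assert (Ez : 2 * C * z j - C = f (xs j)) by (unfold z; field; lra).
    replace (2 * C * v - C - f x) with (2 * C * (v - z j) + (f (xs j) - f x)) by lra.
    eapply Rle_lt_trans; [apply Rabs_triang|]. rewrite Rabs_mult, (Rabs_pos_eq (2*C)) by lra.
    assert (2 * C * Rabs (v - z j) <= 2 * C * (2 / IZR (qz M j))) by (apply Rmult_le_compat_l; lra).
    lra. }
  assert (Gconv : forall v1 v2 v, Gd v1 -> Gd v2 -> (v1 <= v <= v2 \/ v2 <= v <= v1) -> Gd v).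
  { intros v1 v2 v G1 G2 Hv. unfold Gd in *.
    apply Rabs_def2 in G1. apply Rabs_def2 in G2.
    destruct Hv as [[H1 H2]|[H1 H2]].
    - assert (2*C*v1 <= 2*C*v) by (apply Rmult_le_compat_l; lra).
      assert (2*C*v <= 2*C*v2) by (apply Rmult_le_compat_l; lra).
      apply Rabs_def1; lra.
    - assert (2*C*v2 <= 2*C*v) by (apply Rmult_le_compat_l; lra).
      assert (2*C*v <= 2*C*v1) by (apply Rmult_le_compat_l; lra).
      apply Rabs_def1; lra. }
  set (V1 := Vp (IZR N) (IZR M) t). set (V2 := Vp (IZR N) (IZR M) (t + 1/2)).
  pose proof (Vp_range (IZR N) (IZR M) t ltac:(lra) HNr HMr) as RV1.
  pose proof (Vp_range (IZR N) (IZR M) (t+1/2) ltac:(lra) HNr HMr) as RV2.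
  fold V1 in RV1. fold V2 in RV2.
  change (Gd (V2 + Rmax 0 (V1 - V2 + Om t) - Rmax 0 (V1 - V2 - Om t) - Om t)).
  destruct (base_Int_part t) as [Hf1 Hf2].
  assert (Hk0 : (0 <= Int_part t)%Z) by (assert (IZR (Int_part t) > -1) by lra; apply lt_IZR in H; lia).
  set (j := Z.to_nat (Int_part t)).
  assert (Hjr : INR j = IZR (Int_part t)) by (unfold j; rewrite INR_IZR_INZ, Z2Nat.id; auto).
  rewrite <- Hjr in Hf1, Hf2.
  assert (HjJ : (j <= J)%nat) by (apply INR_le; lra).
  assert (HjJ' : INR j < INR J -> (S j <= J)%nat) by (intros HH; apply INR_lt in HH; lia).
  assert (HSj : INR (S j) = INR j + 1) by apply S_INR.
  destruct (Rle_dec (t - INR j) (1/8)).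
  { rewrite (Om_0 t j) by lra. destruct (comb V1 V2 0 RV1 RV2 ltac:(lra)) as [E _].
    rewrite E by auto. apply (Gj j HjJ); [rewrite Rabs_pos_eq; lra | lra]. }
  destruct (Rle_dec (t - INR j) (3/8)).
  { pose proof (Om_mid t j ltac:(lra)). destruct (comb V1 V2 (Om t) RV1 RV2 H) as [_ [_ E]].
    apply (Gconv V1 V2); auto.
    - apply (Gj j HjJ); [rewrite Rabs_pos_eq; lra | lra].
    - apply (Gj j HjJ); [rewrite Rabs_pos_eq; lra | lra]. }
  destruct (Rle_dec (t - INR j) (5/8)).
  { rewrite (Om_1 t j) by lra. destruct (comb V1 V2 1 RV1 RV2 ltac:(lra)) as [_ [E _]].
    rewrite E by auto. apply (Gj j HjJ); [rewrite Rabs_pos_eq; lra | lra]. }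
  destruct (Rle_dec (t - INR j) (7/8)).
  { pose proof (Om_mid t j ltac:(lra)). destruct (comb V1 V2 (Om t) RV1 RV2 H) as [_ [_ E]].
    apply (Gconv V1 V2); auto.
    - apply (Gj j HjJ); [rewrite Rabs_pos_eq; lra | lra].
    - apply (Gj (S j) (HjJ' ltac:(lra))); rewrite HSj; [rewrite Rabs_left1; lra | lra]. }
  { rewrite (Om_0 t j) by lra. destruct (comb V1 V2 0 RV1 RV2 ltac:(lra)) as [E _].
    rewrite E by auto. apply (Gj (S j) (HjJ' ltac:(lra))); rewrite HSj; [rewrite Rabs_left1; lra | lra]. }
Qed.
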